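(* For every integer $x\ge 3$, $$s^-(x+1)\;\ge\;s^-(x)+\frac{\log 2}{x}.$$
   Context: A square is a nonempty word of the form $uu$; a word is square-free if no contiguous subword of it is a square. $\omega_n^-(x)$ is the number of square-free words of length $n$ over an $x$-letter alphabet and $s^-(x)=\lim_{n\to\infty}\frac1n\log\omega_n^-(x)$ (this limit exists). *)

(* Defs.v *)
From Stdlib Require Import Reals.
From Coquelicot Require Import Coquelicot.
From mathcomp Require Import all_boot.

Set Implicit Arguments.
Unset Strict Implicit.
Unset Printing Implicit Defensive.
Local Open Scope nat_scope.

Definition is_square {T : eqType} (u : seq T) : bool :=
  (0 < size u)%N && ~~ odd (size u) && (take (size u)./2 u == drop (size u)./2 u).

Definition square_free {T : eqType} (w : seq T) : bool :=
  [forall i : 'I_(size w).+1, forall l : 'I_(size w).+1,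
     ~~ is_square (take l (drop i w))].

Definition omega_sf (n x : nat) : nat :=
  #|[set t : n.-tuple 'I_x | square_free t]|.

Definition s_sf (x : nat) : R :=
  real (Lim_seq (fun n : nat => Rdiv (ln (INR (omega_sf n x))) (INR n))).

(* Main.v *)
Require Import Defs.
From Stdlib Require Import Reals.
From Coquelicot Require Import Coquelicot.
From mathcomp Require Import all_boot.
From Stdlib Require Import Lra.
Section Aux1.
Set Implicit Arguments. Unset Strict Implicit. Unset Printing Implicit Defensive.
Local Open Scope nat_scope.

Lemma is_square_map (T U : eqType) (f : T -> U) (u : seq T) :
  is_square u -> is_square (map f u).
Proof.
rewrite /is_square size_map -map_take -map_drop.
by case/andP => /andP[-> ->] /eqP ->; rewrite eqxx.
Qed.

Lemma sf_map (T U : eqType) (f : T -> U) (s : seq T) :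
  square_free (map f s) -> square_free s.
Proof.
rewrite /square_free size_map => /forallP H.
apply/forallP => i; apply/forallP => l.
have := forallP (H i) l; rewrite -map_drop -map_take; apply: contra.
exact: is_square_map.
Qed.

Fixpoint tmf (f n : nat) : bool :=
  if f is f'.+1 then (if n is 0 then false else addb (odd n) (tmf f' n./2)) else false.

Lemma tmf_stable f g n : n <= f -> n <= g -> tmf f n = tmf g n.
Proof.
elim: f g n => [|f IH] [|g] [|n] //= Hf Hg.
have Hu : uphalf n <= n.
  by rewrite uphalf_half -{3}(odd_double_half n) leq_add2l -addnn leq_addr.
by rewrite (IH g) // (leq_trans Hu) // -ltnS.
Qed.

Definition tm n := tmf n n.

Lemma tm_rec n : 0 < n -> tm n = addb (odd n) (tm n./2).
Proof.
case: n => // n _; rewrite /tm /=; congr addb; apply: tmf_stable => //.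
by rewrite uphalf_half -{3}(odd_double_half n) leq_add2l -addnn leq_addr.
Qed.

Lemma tm_bd (b : bool) m : tm (b + m.*2) = addb b (tm m).
Proof.
case: b; last first.
  case: m => [|m] //; rewrite add0n tm_rec ?double_gt0 //.
  by rewrite doubleK odd_double.
rewrite tm_rec ?addn_gt0 // half_bit_double oddD odd_double.
by [].
Qed.

Lemma tm_F1 j : ~~ odd j -> tm j.+1 = ~~ tm j.
Proof.
move=> ej; rewrite -(even_halfK ej) -add1n (tm_bd true) -[_.*2]add0n (tm_bd false).
by [].
Qed.

Lemma tm_ovf p : 0 < p -> forall i, (forall k, k <= p -> tm (i+k) = tm (i+k+p)) -> False.
Proof.
elim/ltn_ind: p => p IH p0 i H.
case: (boolP (odd p)) => op.
- have D : forall k, k < p -> tm (i+k).+1 = ~~ tm (i+k).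
    move=> k kp; case: (boolP (odd (i+k))) => o; last exact: tm_F1.
    have e : ~~ odd (i + k + p) by rewrite oddD o op.
    have := tm_F1 e.
    by rewrite -addSn -addnS -(H k.+1 kp) -(H k (ltnW kp)) addnS.
  have A : forall k, k <= p -> tm (i+k) = addb (tm i) (odd k).
    elim=> [|k IHk] kp; first by rewrite addn0 addbF.
    by rewrite addnS D // IHk ?(ltnW kp) //= addbN.
  have := H 0 (leq0n _); rewrite addn0 (A p (leqnn p)) op addbT.
  by case: (tm i).
- have pe : p = (p./2).*2 by rewrite even_halfK.
  have q0 : 0 < p./2 by rewrite -double_gt0 -pe.
  apply: (IH p./2 _ q0 i./2).
    by rewrite {2}pe -addnn -{1}[p./2]addn0 ltn_add2l.
  move=> k kq.
  have h : tm (i + k.*2) = tm (i + k.*2 + p./2.*2).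
    by rewrite -pe; apply: H; rewrite pe leq_double.
  have e1 : i + k.*2 = odd i + (i./2 + k).*2 by rewrite !doubleD !addnA odd_double_half.
  have e2 : i + k.*2 + p./2.*2 = odd i + (i./2 + k + p./2).*2.
    by rewrite !doubleD !addnA odd_double_half.
  move: h; rewrite e2 e1 !tm_bd.
  by case: (odd i) => /=; [move/negb_inj|].
Qed.

Definition cT n : nat := (tm n.+1 : nat) + 1 - tm n.

Lemma cT_lt3 n : cT n < 3.
Proof. by rewrite /cT; case: (tm n.+1); case: (tm n). Qed.

Lemma cT_sq i L : 0 < L -> (forall k, k < L -> cT (i+k) = cT (i+k+L)) -> False.
Proof.
move=> L0 H.
have key : forall k, k <= L -> (tm (i+k+L) : nat) + tm i = (tm (i+L) : nat) + tm (i+k).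
  elim=> [|k IHk] kL; first by rewrite addn0 addnC.
  have := H k kL; have := IHk (ltnW kL); rewrite /cT !addnS addSn.
  move: (tm (i+k+L)) (tm (i + k + L).+1) (tm (i + k)) (tm (i + k).+1) (tm i) (tm (i+L)).
  by do 6!case.
have := key L (leqnn L).
have eL : forall k, k <= L -> tm (i+k) = tm (i+k+L).
  move=> k kL; have := key k kL; have := key L (leqnn L).
  move: (tm (i+k+L)) (tm (i+k)) (tm i) (tm (i+L)) (tm (i+L+L)).
  by do 5!case.
move=> _; exact: (tm_ovf L0 eL).
Qed.

Lemma sf_cT n : square_free (mkseq cT n).
Proof.
apply/forallP => -[i Hi]; apply/forallP => -[l Hl]; apply/negP => /=.
set u := take l (drop i (mkseq cT n)).
have nu : forall j, j < size u -> nth 0 u j = cT (i + j).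
  move=> j; rewrite /u size_take_min size_drop size_mkseq leq_min => /andP[jl jn].
  rewrite nth_take // nth_drop nth_mkseq //.
  by rewrite -ltn_subRL.
rewrite /is_square; move=> H; case/andP: H => H /eqP tdu; case/andP: H => s0 se.
set Ns := size u in s0 se tdu nu *.
have NsL : Ns = Ns./2 + Ns./2 by rewrite addnn even_halfK.
have L0 : 0 < Ns./2 by rewrite -double_gt0 -addnn -NsL.
apply: (@cT_sq i _ L0) => k kL.
have kNs : k < Ns by rewrite NsL ltn_addr.
have := congr1 (fun s => nth 0 s k) tdu.
rewrite nth_take // nth_drop nu // nu; last by rewrite {2}NsL ltn_add2l.
by rewrite (addnC Ns./2 k) addnA.
Qed.

Lemma omega_ge1 n x : 3 <= x -> 0 < omega_sf n x.
Proof.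
move=> hx.
have cx : forall j, cT j < x by move=> j; exact: leq_trans (cT_lt3 j) hx.
pose cc j : 'I_x := Ordinal (cx j).
pose w := mkseq cc n.
have sw : size w == n by rewrite size_mkseq.
rewrite /omega_sf card_gt0; apply/set0Pn; exists (Tuple sw); rewrite inE /=.
apply: (@sf_map _ _ val); rewrite /w /mkseq -map_comp.
exact: sf_cT.
Qed.

Lemma omega_le n x : omega_sf n x <= x ^ n.
Proof.
by rewrite /omega_sf (leq_trans (max_card _)) // card_tuple card_ord.
Qed.

Section Count.
Variables n x : nat.
Hypothesis x0 : 0 < x.

Definition Aset := [set t : n.-tuple 'I_x | square_free t].
Definition pos (w : n.-tuple 'I_x) (a : 'I_x) : {set 'I_n} := [set i | tnth w i == a].
Definition Aa a := [set w in Aset | n %/ x <= #|pos w a|].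

Lemma sum_pos w : n = \sum_a #|pos w a|.
Proof.
rewrite -{1}(card_ord n) -sum1_card (partition_big (fun i => tnth w i) predT) //=.
apply: eq_bigr => a _; rewrite sum1dep_card.
by apply: eq_card => i; rewrite !inE.
Qed.

Lemma exists_freq w : exists a, n %/ x <= #|pos w a|.
Proof.
case: (boolP [exists a, n %/ x <= #|pos w a|]) => [/existsP //|/existsPn H].
have : \sum_(a : 'I_x) #|pos w a| <= \sum_(a : 'I_x) (n %/ x).-1.
  apply: leq_sum => a _; have := H a; rewrite -ltnNge => h.
  by rewrite -ltnS (leq_trans h) // leqSpred.
rewrite -sum_pos sum_nat_const card_ord.
have q0 : 0 < n %/ x.
  by case: (n %/ x) H => // H; have := H (Ordinal x0).
move=> h.
have e : x * (n %/ x).-1 + x = n %/ x * x by rewrite -mulnSr prednK // mulnC.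
have : x * (n %/ x).-1 < n.
  apply: (@leq_trans (n %/ x * x)); last by rewrite {2}(divn_eq n x) leq_addr.
  by rewrite -e -{1}[x * _]addn0 ltn_add2l.
by rewrite ltnNge h.
Qed.

Definition Gmap (p : n.-tuple 'I_x * {set 'I_n}) : n.-tuple 'I_x.+1 :=
  [tuple (if i \in p.2 then ord_max else widen_ord (leqnSn x) (tnth p.1 i)) | i < n].

Lemma widen_neq_max (c : 'I_x) : widen_ord (leqnSn x) c != ord_max.
Proof. by rewrite -(inj_eq val_inj) /= neq_ltn ltn_ord. Qed.

Section FixA.
Variable a : 'I_x.
Definition Dset := [set p : n.-tuple 'I_x * {set 'I_n} | (p.1 \in Aa a) && (p.2 \subset pos p.1 a)].

Lemma D_ge : #|Aa a| * 2 ^ (n %/ x) <= #|Dset|.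
Proof.
rewrite -sum_nat_const -sum1_card (partition_big (fun p => p.1) (mem (Aa a))) /=; last first.
  by move=> p; rewrite inE => /andP[].
apply: leq_sum => w wA.
apply: (@leq_trans (#|powerset (pos w a)|)).
  by rewrite card_powerset leq_pexp2l //; move: wA; rewrite inE => /andP[].
have inj : injective (fun S : {set 'I_n} => (w, S)) by move=> S1 S2 [].
rewrite -(card_imset _ inj) sum1dep_card.
apply: subset_leq_card; apply/subsetP => p /imsetP [S SP ->].
rewrite !inE /= eqxx andbT -powersetE SP andbT; by move: wA; rewrite !inE.
Qed.

Definition phi (c : 'I_x.+1) : 'I_x := insubd a (val c).

Lemma phiG p : p \in Dset -> map phi (Gmap p) = p.1.
Proof.
rewrite inE => /andP[_ /subsetP sub].
have -> : map phi (Gmap p) = map_tuple phi (Gmap p) by [].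
congr val; apply: eq_from_tnth => i.
rewrite tnth_map tnth_mktuple.
case: ifP => iS.
  have := sub i iS; rewrite inE => /eqP ->.
  by apply: val_inj; rewrite /phi val_insubd /= ltnn.
by apply: val_inj; rewrite /phi val_insubd /= ltn_ord.
Qed.

Lemma G_inj : {in Dset &, injective Gmap}.
Proof.
move=> p q pD qD E.
have tE : forall i, tnth (Gmap p) i = tnth (Gmap q) i by move=> i; rewrite E.
have S : p.2 = q.2.
  apply/setP => i; have := tE i; rewrite !tnth_mktuple.
  case: ifP; case: ifP => // _ _.
    by move=> h; have := widen_neq_max (tnth q.1 i); rewrite -h eqxx.
  by move=> h; have := widen_neq_max (tnth p.1 i); rewrite h eqxx.
have W : p.1 = q.1.
  have := phiG pD; have := phiG qD; rewrite E => -> h.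
  by apply: val_inj.
by case: p q {pD qD E tE} S W => [p1 p2] [q1 q2] /= -> ->.
Qed.

Lemma D_le : #|Dset| <= omega_sf n x.+1.
Proof.
rewrite -(card_in_imset G_inj) /omega_sf; apply: subset_leq_card.
apply/subsetP => v /imsetP [p pD ->]; rewrite inE.
apply: (@sf_map _ _ phi); rewrite (phiG pD).
by move: pD; rewrite !inE => /andP[/andP[]].
Qed.
End FixA.

Lemma count_ineq : omega_sf n x * 2 ^ (n %/ x) <= x * omega_sf n x.+1.
Proof.
have H1 : omega_sf n x <= \sum_(a : 'I_x) #|Aa a|.
  rewrite /omega_sf -/Aset -sum1_card.
  rewrite (eq_bigr (fun w => 1)) //.
  apply: (@leq_trans (\sum_(w in Aset) \sum_(a : 'I_x) (w \in Aa a))).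
    apply: leq_sum => w wA; have [a ha] := exists_freq w.
    by rewrite (bigD1 a) //= inE wA ha.
  rewrite exchange_big /=; apply: leq_sum => a _.
  rewrite -sum1_card big_mkcond /= [X in _ <= X]big_mkcond /=.
  apply: leq_sum => w _; case: ifP => //; rewrite inE => ->; by case: (w \in Aset).
apply: (@leq_trans ((\sum_(a : 'I_x) #|Aa a|) * 2 ^ (n %/ x))).
  by rewrite leq_mul2r H1 orbT.
rewrite big_distrl /= -[x in x * _]card_ord -sum_nat_const.
apply: leq_sum => a _.
exact: leq_trans (D_ge a) (D_le a).
Qed.
End Count.

Set Implicit Arguments. Unset Strict Implicit. Unset Printing Implicit Defensive.
Local Open Scope R_scope.

Lemma INR_mul (a b : nat) : INR (a * b)%nat = INR a * INR b.
Proof. by rewrite mulnE mult_INR. Qed.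

Lemma INR_exp (a k : nat) : INR (a ^ k)%nat = INR a ^ k.
Proof. elim: k => [|k IH]; first by rewrite expn0. by rewrite expnS INR_mul IH. Qed.

Lemma INR_leq (a b : nat) : (a <= b)%nat -> INR a <= INR b.
Proof. by move/leP; apply: le_INR. Qed.

Lemma INR_pos (a : nat) : (0 < a)%nat -> 0 < INR a.
Proof. by move/ltP; apply: lt_0_INR. Qed.

Definition useq x n := ln (INR (omega_sf n x)) / INR n.

Lemma INR_ge3 x : (3 <= x)%nat -> 3 <= INR x.
Proof. move=> hx; have := INR_leq hx; simpl; lra. Qed.

Lemma useq_bounds x n : (3 <= x)%nat -> 0 <= useq x n <= ln (INR x).
Proof.
move=> hx.
have x3 := INR_ge3 hx.
have lx : 0 <= ln (INR x).
  rewrite -ln_1; apply: ln_le; lra.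
have o1 : 1 <= INR (omega_sf n x) by apply: (INR_leq (omega_ge1 n hx)).
have lo : 0 <= ln (INR (omega_sf n x)) by rewrite -ln_1; apply: ln_le; lra.
rewrite /useq; case: n o1 lo => [|n] o1 lo.
  rewrite /= /Rdiv Rinv_0 Rmult_0_r; lra.
have n0 : 0 < INR n.+1 by apply: INR_pos.
have up : ln (INR (omega_sf n.+1 x)) <= INR n.+1 * ln (INR x).
  rewrite -ln_pow; last lra.
  apply: ln_le; first lra.
  rewrite -INR_exp; apply: INR_leq; exact: omega_le.
split.
  apply: Rdiv_le_0_compat => //.
apply/Rle_div_l => //; lra.
Qed.

Lemma INR2 : INR 2 = 2.
Proof. simpl; lra. Qed.

Lemma key_ln x n : (3 <= x)%nat ->
  ln (INR (omega_sf n x)) + INR (n %/ x) * ln 2 <= ln (INR x) + ln (INR (omega_sf n x.+1)).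
Proof.
move=> hx.
have x0 : (0 < x)%nat by apply: leq_trans hx.
have H := INR_leq (count_ineq n x0).
rewrite !INR_mul INR_exp INR2 in H.
have o1 : 1 <= INR (omega_sf n x) by apply: (INR_leq (omega_ge1 n hx)).
have o2 : 1 <= INR (omega_sf n x.+1) by apply: (INR_leq (omega_ge1 n (leq_trans hx (leqnSn x)))).
have x3 := INR_ge3 hx.
have p2 : 0 < 2 ^ (n %/ x) by apply: pow_lt; lra.
have pp : 0 < INR (omega_sf n x) * 2 ^ (n %/ x) by apply: Rmult_lt_0_compat; lra.
have := ln_le _ _ pp H.
rewrite ln_mult; [|lra|lra]; rewrite ln_mult; [|lra|lra]; rewrite ln_pow; last lra.
lra.
Qed.

Lemma divb x n : (0 < x)%nat -> INR n - INR x <= INR (n %/ x) * INR x.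
Proof.
move=> x0.
have h : (n <= n %/ x * x + x)%nat.
  by rewrite {1}(divn_eq n x) leq_add2l ltnW // ltn_pmod.
have := INR_leq h; rewrite addnE plus_INR INR_mul; lra.
Qed.

Lemma ev_ineq x (eps : R) : (3 <= x)%nat -> 0 < eps ->
  eventually (fun n => useq x n + (ln 2 / INR x - eps) <= useq x.+1 n).
Proof.
move=> hx e0.
have x3 := INR_ge3 hx.
have l2 : 0 < ln 2 by rewrite -ln_1; apply: ln_increasing; lra.
have lx : 0 <= ln (INR x) by rewrite -ln_1; apply: ln_le; lra.
set C := ln 2 + ln (INR x).
have C0 : 0 < C by rewrite /C; lra.
have [N [HN N0]] := archimed_cor1 (eps / C) ltac:(apply: Rdiv_lt_0_compat; lra).
exists N => n /leP nN.
have n0 : (0 < n)%nat by apply: leq_trans nN; apply/leP.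
have m0 : 0 < INR n by apply: INR_pos.
have Nn : INR N <= INR n by apply: INR_leq.
have N0' : 0 < INR N by apply: INR_pos; apply/ltP.
have Cm : C < eps * INR n.
  have : / INR N * C < eps / C * C by apply: Rmult_lt_compat_r.
  have -> : eps / C * C = eps by field; lra.
  move=> h.
  have h2 : C < eps * INR N.
    have -> : C = (/ INR N * C) * INR N by field; lra.
    by apply: Rmult_lt_compat_r.
  nra.
have K := key_ln n hx.
have D := divb n (leq_trans (isT : (0 < 3)%nat) hx).
rewrite /useq.
rewrite /C in Cm; clear C0 HN; clear C.
move: K D Cm x3 m0; set a := ln (INR (omega_sf n x)); set b := ln (INR (omega_sf n x.+1)).
set q := INR (n %/ x); set X := INR x; set m := INR n => K D Cm x3 m0.
have t1 : m / X - 1 <= q.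
  apply: (Rmult_le_reg_r X); first lra.
  have -> : (m / X - 1) * X = m - X by field; lra.
  lra.
have t2 : ln 2 * (m / X) - ln 2 <= q * ln 2 by nra.
have g : a + ln 2 * (m / X) - eps * m <= b by lra.
have -> : a / m + (ln 2 / X - eps) = (a + ln 2 * (m / X) - eps * m) / m by field; lra.
apply: Rmult_le_compat_r => //.
by left; apply: Rinv_0_lt_compat.
Qed.

Notation RFin := Coquelicot.Rbar.Finite.

Lemma rbar_fin (r : Rbar) (lo hi : R) : Rbar_le lo r -> Rbar_le r hi -> r = RFin (real r).
Proof. by case: r. Qed.

Lemma LimSup_shift u a lo hi : (forall n, lo <= u n <= hi) ->
  exists s, LimSup_seq u = RFin s /\ LimSup_seq (fun n => u n + a) = RFin (s + a).
Proof.
move=> B.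
have H1 : Rbar_le (LimSup_seq (fun _ => lo)) (LimSup_seq u) by apply: LimSup_le; exists 0%nat => n _; case: (B n).
have H2 : Rbar_le (LimSup_seq u) (LimSup_seq (fun _ => hi)) by apply: LimSup_le; exists 0%nat => n _; case: (B n).
rewrite !LimSup_seq_const in H1 H2.
exists (real (LimSup_seq u)); split; first exact: (rbar_fin H1 H2).
apply: is_LimSup_seq_unique.
have := rbar_fin H1 H2.
rewrite /LimSup_seq; case: (ex_LimSup_seq u) => l /= Hl El.
rewrite El in Hl; move: (real l) Hl => s Hl /= eps.
have [h1 h2] := Hl eps; split.
  move=> N; have [n [nN hn]] := h1 N; exists n; split => //; lra.
case: h2 => N hN; exists N => n nN; have := hN n nN; lra.
Qed.

Lemma LimInf_shift u a lo hi : (forall n, lo <= u n <= hi) ->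
  exists s, LimInf_seq u = RFin s /\ LimInf_seq (fun n => u n + a) = RFin (s + a).
Proof.
move=> B.
have H1 : Rbar_le (LimInf_seq (fun _ => lo)) (LimInf_seq u) by apply: LimInf_le; exists 0%nat => n _; case: (B n).
have H2 : Rbar_le (LimInf_seq u) (LimInf_seq (fun _ => hi)) by apply: LimInf_le; exists 0%nat => n _; case: (B n).
rewrite !LimInf_seq_const in H1 H2.
exists (real (LimInf_seq u)); split; first exact: (rbar_fin H1 H2).
apply: is_LimInf_seq_unique.
have := rbar_fin H1 H2.
rewrite /LimInf_seq; case: (ex_LimInf_seq u) => l /= Hl El.
rewrite El in Hl; move: (real l) Hl => s Hl /= eps.
have [h1 h2] := Hl eps; split.
  move=> N; have [n [nN hn]] := h1 N; exists n; split => //; lra.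
case: h2 => N hN; exists N => n nN; have := hN n nN; lra.
Qed.

Lemma Lim_shift u a lo hi : (forall n, lo <= u n <= hi) ->
  exists s, Lim_seq u = RFin s /\ Lim_seq (fun n => u n + a) = RFin (s + a).
Proof.
move=> B.
have [s1 [E1 F1]] := LimSup_shift a B.
have [s2 [E2 F2]] := LimInf_shift a B.
exists ((s1 + s2) / 2); rewrite /Lim_seq E1 E2 F1 F2 /=; split => //.
congr RFin; field.
Qed.

Lemma main_aux (x : nat) (hx : (3 <= x)%nat) :
  real (Lim_seq (useq x)) + ln 2 / INR x <= real (Lim_seq (useq x.+1)).
Proof.
have Bu := fun n => useq_bounds n hx.
have Bv := fun n => useq_bounds n (leq_trans hx (leqnSn x)).
have [U [EU _]] := Lim_shift 0 Bu.
have [V [EV _]] := Lim_shift 0 Bv.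
rewrite EU EV /=.
apply: Rnot_lt_le => H.
set eps := (U + ln 2 / INR x - V) / 2.
have e0 : 0 < eps by rewrite /eps; lra.
have [U' [EU' F]] := Lim_shift (ln 2 / INR x - eps) Bu.
rewrite EU in EU'; case: EU' => EUU; rewrite -EUU in F.
have := Lim_seq_le_loc _ _ (ev_ineq hx e0).
rewrite F EV /= => h.
rewrite /eps in h; lra.
Qed.
End Aux1.

Unset Implicit Arguments.

Theorem mainTheorem9 (x : nat) (hx : (3 <= x)%nat) :
  (s_sf x + ln 2 / INR x <= s_sf x.+1)%R.
Proof.
exact: (main_aux hx).
Qed.
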